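(* Let $\Phi(z)\in K(z)$ have degree $d\ge1$; put $B_0=B_0(\Phi)$ and $c_0=\Phi(0)$, and assume $\Phi(D(0,B_0)^-)=D(c_0,R)^-$ for some $R>0$. Suppose $|c_0|>1$ and $R\le|c_0|$. Then $\mathrm{Lip}_{\mathrm{Berk}}(\Phi|_{[0,\zeta_{0,B_0}]})\le d/B_0$.
   Context: $K$ is a complete, algebraically closed field with a nontrivial nonarchimedean absolute value. $D(a,r)^-=\{z\in K:|z-a|<r\}$. Fix $q>1$. $\mathbf P^1_{\mathrm{Berk}}$ is the Berkovich projective line over $K$ (tree containing $\mathbf P^1(K)$); $\zeta_{a,r}$ is the point of $D(a,r)=\{|z-a|\le r\}$, $\zeta_{a,0}=a$, $\zeta_G=\zeta_{0,1}$; $[x,y]$ unique path, $(x,y]$ half-open. $\rho$ is the logarithmic path metric on $\mathbf H^1=\mathbf P^1_{\mathrm{Berk}}\setminus\mathbf P^1(K)$ (path $\{\zeta_{a,r}:R_1\le r\le R_2\}$ has length $\log_q(R_2/R_1)$); $\mathrm{diam}_G(x)=q^{-\rho(\zeta_G,x)}$ on $\mathbf H^1$, $0$ on $\mathbf P^1(K)$. $x\vee_G y$ first common point of $[x,\zeta_G],[y,\zeta_G]$; $d(x,y)=2\mathrm{diam}_G(x\vee_G y)-\mathrm{diam}_G(x)-\mathrm{diam}_G(y)$. For $S\subseteq\mathbf P^1_{\mathrm{Berk}}$, $\mathrm{Lip}_{\mathrm{Berk}}(\Phi|_S)=\sup_{x\ne y\in S}d(\Phi x,\Phi y)/d(x,y)$.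 For $a\in\mathbf P^1(K)$, $0<r<1$, $Q_{a,r}$ is the point of $[a,\zeta_G]$ with $\mathrm{diam}_G=r$, $\mathcal B(a,r)^-=\{x:Q_{a,r}\in(x,\zeta_G]\}$, $\mathcal B(a,1)^-=\bigcup_{r<1}\mathcal B(a,r)^-$; $B_0(\Phi)=\sup\{0<r\le1:\Phi(\mathcal B(a,r)^-)\ne\mathbf P^1_{\mathrm{Berk}}\ \forall a\in\mathbf P^1(K)\}$. *)

(* Defs.v *)
From HB Require Import structures.
From mathcomp Require Import all_boot all_order all_algebra.
From Stdlib Require Import Reals ClassicalEpsilon.

Set Implicit Arguments.
Unset Strict Implicit.
Unset Printing Implicit Defensive.

Import GRing.Theory.
Local Open Scope ring_scope.
Delimit Scope ring_scope with ring.

Section Berk.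
Variable K : closedFieldType.
Variable absv : K -> R.

Definition Rcauchy (u : nat -> K) : Prop :=
  forall eps : R, (0 < eps)%R -> exists N : nat, forall m n : nat,
    leq N m -> leq N n -> (absv ((u m - u n)%ring) < eps)%R.

Definition nonarch_complete_abs : Prop :=
  (forall x : K, (0 <= absv x)%R) /\
  (forall x : K, absv x = 0%R <-> x = 0) /\
  (forall x y : K, absv ((x * y)%ring) = (absv x * absv y)%R) /\
  (forall x y : K, (absv ((x + y)%ring) <= Rmax (absv x) (absv y))%R) /\
  (exists x : K, absv x <> 0%R /\ absv x <> 1%R) /\
  (forall u : nat -> K, Rcauchy u -> exists l : K,
     forall eps : R, (0 < eps)%R -> exists N : nat, forall n : nat,
       leq N n -> (absv ((u n - l)%ring) < eps)%R).

(* A point of A^1_Berk is a multiplicative seminorm on K[T] extending absv;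
   P^1_Berk = A^1_Berk plus the point at infinity (None). *)
Definition mult_seminorm (s : {poly K} -> R) : Prop :=
  (forall p, (0 <= s p)%R) /\
  (forall c : K, s (c%:P) = absv c) /\
  (forall p q, s ((p * q)%ring) = (s p * s q)%R) /\
  (forall p q, (s ((p + q)%ring) <= Rmax (s p) (s q))%R).

Definition berk := option ({poly K} -> R).

Definition is_berk (x : berk) : Prop :=
  match x with None => True | Some s => mult_seminorm s end.

(* classical points: P^1(K) = option K, None = infinity *)
Definition clpt (a : option K) : berk :=
  match a with
  | None => None
  | Some a => Some (fun p => absv p.[a])
  end.

(* zeta_{a,r}: sup norm on D(a,r) = Gauss norm in the variable T - a *)
Definition zeta (a : K) (r : R) : berk :=
  Some (fun p : {poly K} =>
    let q := p \Po ('X + a%:P) in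
    foldr Rmax 0%R (map (fun i => (absv q`_i * r ^ i)%R) (iota 0 (size q)))).

Definition zetaG : berk := zeta 0 1.

(* partial order of the tree rooted at infinity: x below y *)
Definition le_inf (x y : berk) : Prop :=
  match y with
  | None => True
  | Some t => match x with None => False | Some s => forall f, (s f <= t f)%R end
  end.

(* z in the path [x,y] *)
Definition in_seg (x y z : berk) : Prop :=
  is_berk z /\ (le_inf x z \/ le_inf y z) /\
  (forall w, is_berk w -> le_inf x w -> le_inf y w -> le_inf z w).

Definition is_glb (E : R -> Prop) (m : R) : Prop :=
  is_lub (fun t => E (- t)%R) (- m)%R.
Definition Rinf (E : R -> Prop) : R :=
  epsilon (inhabits 0%R) (fun m => is_glb E m).

(* diam_G(x) = q^{-rho(zeta_G,x)}; for x in A^1_Berk this equals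
   diam(x) / max(1,[T]_x)^2 where diam(x) = inf_a [T - a]_x. *)
Definition diamG (x : berk) : R :=
  match x with
  | None => 0%R
  | Some s => (Rinf (fun t => exists a : K, t = s (('X - a%:P)%ring)) /
               (Rmax 1 (s ('X)%ring)) ^ 2)%R
  end.

(* x \/_G y : first common point of [x,zeta_G] and [y,zeta_G] *)
Definition joinG (x y : berk) : berk :=
  epsilon (inhabits None) (fun m =>
    in_seg x zetaG m /\ in_seg y zetaG m /\
    forall w, in_seg x zetaG w -> in_seg y zetaG w -> in_seg m zetaG w).

Definition dist (x y : berk) : R :=
  (2 * diamG (joinG x y) - diamG x - diamG y)%R.

(* Phi = P/Q with P,Q coprime, Q <> 0; degree = max(deg P, deg Q). *)
Definition ratmap (P Q : {poly K}) : Prop := coprimep P Q /\ Q != 0.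
Definition rdeg (P Q : {poly K}) : nat := (maxn (size P) (size Q)).-1.

Definition phi_cl (P Q : {poly K}) (a : option K) : option K :=
  match a with
  | Some a => if Q.[a] == 0 then None else Some (P.[a] / Q.[a])
  | None => if leq (size Q).+1 (size P) then None
            else if size P == size Q then Some (lead_coef P / lead_coef Q)
            else Some 0
  end.

(* homogenized f(P/Q) * Q^(deg f) *)
Definition homog (P Q f : {poly K}) : {poly K} :=
  \sum_(i < size f) (f`_i *: (P ^+ i * Q ^+ ((size f).-1 - i))).

(* action on P^1_Berk: [f]_{Phi(x)} = [f o Phi]_x *)
Definition phi_berk (P Q : {poly K}) (x : berk) : berk :=
  match x with
  | None => clpt (phi_cl P Q None)
  | Some s =>
      if Req_EM_T (s Q) 0 then None
      else Some (fun f => (s (homog P Q f) / (s Q) ^ (size f).-1)%R)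
  end.

Definition lip_le (P Q : {poly K}) (S : berk -> Prop) (c : R) : Prop :=
  forall x y, S x -> S y -> x <> y ->
    (dist (phi_berk P Q x) (phi_berk P Q y) <= c * dist x y)%R.

Definition isQ (a : option K) (r : R) (z : berk) : Prop :=
  in_seg (clpt a) zetaG z /\ diamG z = r.

(* B(a,r)^- for 0<r<1 : Q_{a,r} in (x, zeta_G] *)
Definition ball_lt1 (a : option K) (r : R) (x : berk) : Prop :=
  is_berk x /\ exists z, isQ a r z /\ in_seg x zetaG z /\ z <> x.

Definition ballB (a : option K) (r : R) (x : berk) : Prop :=
  ((r < 1)%R /\ ball_lt1 a r x) \/
  (r = 1%R /\ exists r', (0 < r' < 1)%R /\ ball_lt1 a r' x).

Definition B0set (P Q : {poly K}) (r : R) : Prop :=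
  (0 < r <= 1)%R /\
  forall a : option K, exists y, is_berk y /\
    forall x, ballB a r x -> phi_berk P Q x <> y.

Definition B0_of (P Q : {poly K}) (B0 : R) : Prop := is_lub (B0set P Q) B0.

Definition odisc (a : K) (r : R) (z : K) : Prop := (absv ((z - a)%ring) < r)%R.

End Berk.

(* Main.v *)
From Stdlib Require Import Reals Lra Lia ClassicalEpsilon FunctionalExtensionality.
Require Import Defs.
From HB Require Import structures.
From mathcomp Require Import all_boot all_order all_algebra.
Delimit Scope R_scope with Re.
Import GRing.Theory.
Local Open Scope ring_scope.

Section Val.
Variable K : closedFieldType.
Variable absv : K -> R.
Hypothesis Habs : nonarch_complete_abs absv.

Lemma av_ge0 x : (0 <= absv x)%Re.
Proof. by case: Habs. Qed.
Lemma av_eq0 x : absv x = 0%Re <-> x = 0.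
Proof. by case: Habs => _ []. Qed.
Lemma avM x y : absv (x * y) = (absv x * absv y)%Re.
Proof. by case: Habs => _ [] _ []. Qed.
Lemma avD x y : (absv (x + y) <= Rmax (absv x) (absv y))%Re.
Proof. by case: Habs => _ [] _ [] _ []. Qed.
Lemma av0 : absv 0 = 0%Re.
Proof. by apply/av_eq0. Qed.
Lemma av_gt0 x : x != 0 -> (0 < absv x)%Re.
Proof.
move=> /eqP nz; have := av_ge0 x; case/Rle_lt_or_eq_dec => // h.
by exfalso; apply: nz; apply/av_eq0.
Qed.
Lemma av1 : absv 1 = 1%Re.
Proof.
have h := avM 1 1; rewrite mulr1 in h.
have p := av_gt0 1 (oner_neq0 K).
apply: (Rmult_eq_reg_l (absv 1)); last lra. rewrite -h; ring.
Qed.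
Lemma avN1 : absv (-1) = 1%Re.
Proof.
have h := avM (-1) (-1); rewrite mulrNN mulr1 av1 in h.
have p := av_ge0 (-1).
nra.
Qed.
Lemma avN x : absv (- x) = absv x.
Proof. by rewrite -mulN1r avM avN1 Rmult_1_l. Qed.
Lemma avB x y : absv (x - y) = absv (y - x).
Proof. by rewrite -avN opprB. Qed.
Lemma avX x n : absv (x ^+ n) = (absv x ^ n)%Re.
Proof. elim: n => [|n IH]; first by rewrite expr0 av1. by rewrite exprS avM IH. Qed.
Lemma avV x : absv (x^-1) = (/ absv x)%Re.
Proof.
have [->|nz] := eqVneq x 0; first by rewrite invr0 av0 Rinv_0.
have h := avM x (x^-1); rewrite mulfV // av1 in h.
have p := av_gt0 x nz. field_simplify_eq; [lra| lra].
Qed.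
Lemma avDiv x y : absv (x / y) = (absv x / absv y)%Re.
Proof. by rewrite avM avV. Qed.
Lemma avD_lt x y : (absv y < absv x)%Re -> absv (x + y) = absv x.
Proof.
move=> lt.
have h1 := avD x y.
have h2 := avD (x + y) (- y). rewrite addrK avN in h2.
apply: Rle_antisym.
  by apply: (Rle_trans _ _ _ h1); apply: Rmax_lub; lra.
move: h2; rewrite /Rmax; case: Rle_dec => _; lra.
Qed.
Lemma avD_le x y M : (absv x <= M)%Re -> (absv y <= M)%Re -> (absv (x + y) <= M)%Re.
Proof. move=> a b; apply: (Rle_trans _ _ _ (avD x y)); exact: Rmax_lub. Qed.
Lemma avD_ltM x y M : (absv x < M)%Re -> (absv y < M)%Re -> (absv (x + y) < M)%Re.
Proof. move=> a b; apply: (Rle_lt_trans _ _ _ (avD x y)); by apply: Rmax_lub_lt. Qed.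
Lemma avB_le x y M : (absv x <= M)%Re -> (absv y <= M)%Re -> (absv (x - y) <= M)%Re.
Proof. by move=> a b; apply: avD_le; rewrite ?avN. Qed.


Lemma fm_ge (F : nat -> R) (m n i : nat) : (m <= i < m + n)%N -> (F i <= foldr Rmax 0%Re (map F (iota m n)))%Re.
Proof.
elim: n m => [|n IH] m /=; first by rewrite addn0; case/andP=> a b; have := leq_trans b a; rewrite ltnn.
case/andP => a b; have [->|ne] := eqVneq i m; first exact: Rmax_l.
apply: Rle_trans (Rmax_r _ _); apply: IH; rewrite addSnnS b andbT ltn_neqAle a.
by rewrite eq_sym ne.
Qed.
Lemma fm_le (F : nat -> R) (m n : nat) M : (0 <= M)%Re -> (forall i, (m <= i < m + n)%N -> (F i <= M)%Re) ->
  (foldr Rmax 0%Re (map F (iota m n)) <= M)%Re.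
Proof.
elim: n m => [|n IH] m /= M0 h //; apply: Rmax_lub.
  by apply: h; rewrite leqnn addnS ltnS leq_addr.
apply: IH => // i /andP[a b]; apply: h; rewrite (ltnW a) /=; by rewrite addnS -addSn.
Qed.
Lemma fm_ex (F : nat -> R) (m n : nat) : (0 < n)%N -> (forall i, 0 <= F i)%Re ->
  exists i, (m <= i < m + n)%N /\ foldr Rmax 0%Re (map F (iota m n)) = F i.
Proof.
elim: n m => [|n IH] m //= _ h.
case: n IH => [|n] IH.
  by exists m; rewrite leqnn addn1 ltnSn; split=> //=; apply: Rmax_left; apply: h.
have [i [hi e]] := IH m.+1 isT h.
rewrite /Rmax; case: Rle_dec => _.
  exists i; split=> //; case/andP: hi => a b; rewrite (ltnW a) /=; by rewrite addnS -addSn.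
by exists m; rewrite leqnn /= addnS ltnS leq_addr.
Qed.

Definition gn (r : R) (q : {poly K}) : R :=
  foldr Rmax 0%Re (map (fun i => absv q`_i * r ^ i)%Re (iota 0 (size q))).

Lemma zetaE a r : zeta absv a r = Some (fun p => gn r (p \Po ('X + a%:P))).
Proof. by []. Qed.

Section GN.
Variable r : R.
Hypothesis r0 : (0 <= r)%Re.

Lemma term_ge0 (q : {poly K}) i : (0 <= absv q`_i * r ^ i)%Re.
Proof. apply: Rmult_le_pos; [exact: av_ge0| exact: pow_le]. Qed.

Lemma gn_ge (q : {poly K}) i : (absv q`_i * r ^ i <= gn r q)%Re.
Proof.
have [lt|ge] := ltnP i (size q); first by apply: fm_ge; rewrite add0n lt.
rewrite nth_default // av0 Rmult_0_l /gn.
case: (size q) => [|n] /=; first lra.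
apply: Rle_trans (Rmax_l _ _); exact: term_ge0.
Qed.
Lemma gn_ge0 (q : {poly K}) : (0 <= gn r q)%Re.
Proof. apply: Rle_trans (gn_ge q 0); exact: term_ge0. Qed.
Lemma gn_le (q : {poly K}) M : (0 <= M)%Re -> (forall i, absv q`_i * r ^ i <= M)%Re -> (gn r q <= M)%Re.
Proof. by move=> M0 h; apply: fm_le. Qed.
Lemma gn_ex (q : {poly K}) : exists i, gn r q = (absv q`_i * r ^ i)%Re.
Proof.
case sq: (size q) => [|n].
  by exists 0%N; rewrite /gn sq /= nth_default ?sq // av0 Rmult_0_l.
have [i [_ e]] := fm_ex (fun i => absv q`_i * r ^ i)%Re 0 n.+1 isT (fun i => term_ge0 q i).
by exists i; rewrite /gn sq.
Qed.
Lemma gnD (p q : {poly K}) : (gn r (p + q) <= Rmax (gn r p) (gn r q))%Re.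
Proof.
apply: gn_le; first by apply: Rle_trans (Rmax_l _ _); exact: gn_ge0.
move=> i; rewrite coefD.
apply: Rle_trans (Rmult_le_compat_r _ _ _ (pow_le _ i r0) (avD _ _)) _.
rewrite Rmult_comm -RmaxRmult; last exact: pow_le.
apply: Rmax_lub; rewrite Rmult_comm.
  by apply: Rle_trans (Rmax_l _ _); apply: gn_ge.
by apply: Rle_trans (Rmax_r _ _); apply: gn_ge.
Qed.
Lemma gnZ c (q : {poly K}) : gn r (c *: q) = (absv c * gn r q)%Re.
Proof.
apply: Rle_antisym.
  apply: gn_le; first by apply: Rmult_le_pos; [exact: av_ge0| exact: gn_ge0].
  move=> i; rewrite coefZ avM Rmult_assoc; apply: Rmult_le_compat_l; [exact: av_ge0| exact: gn_ge].
have [i ->] := gn_ex q.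
by rewrite -Rmult_assoc -avM -coefZ; apply: gn_ge.
Qed.
Lemma gnN (q : {poly K}) : gn r (- q) = gn r q.
Proof. by rewrite -scaleN1r gnZ avN av1 Rmult_1_l. Qed.
Lemma gnC c : gn r c%:P = absv c.
Proof.
apply: Rle_antisym.
  apply: gn_le; first exact: av_ge0.
  by case=> [|i]; rewrite coefC /=; [rewrite Rmult_1_r; lra | rewrite av0 Rmult_0_l; exact: av_ge0].
by have := gn_ge c%:P 0; rewrite coefC /= Rmult_1_r.
Qed.
Lemma gn0 : gn r 0 = 0%Re.
Proof. by rewrite -polyC0 gnC av0. Qed.

Lemma av_sum_le (n : nat) (F : 'I_n -> K) (P : pred 'I_n) w M :
  (0 <= M)%Re -> (0 <= w)%Re -> (forall j, P j -> absv (F j) * w <= M)%Re ->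
  (absv (\sum_(j < n | P j) F j) * w <= M)%Re.
Proof.
move=> M0 w0 h; apply: (big_ind (fun x => absv x * w <= M)%Re) => //.
  by rewrite av0 Rmult_0_l.
move=> x y hx hy; apply: Rle_trans (Rmult_le_compat_r _ _ _ w0 (avD x y)) _.
rewrite Rmult_comm -RmaxRmult // Rmult_comm [(w * _)%Re]Rmult_comm; exact: Rmax_lub.
Qed.
Lemma av_sum_lt (n : nat) (F : 'I_n -> K) (P : pred 'I_n) w M :
  (0 < M)%Re -> (0 <= w)%Re -> (forall j, P j -> absv (F j) * w < M)%Re ->
  (absv (\sum_(j < n | P j) F j) * w < M)%Re.
Proof.
move=> M0 w0 h; apply: (big_ind (fun x => absv x * w < M)%Re) => //.
  by rewrite av0 Rmult_0_l.
move=> x y hx hy; apply: Rle_lt_trans (Rmult_le_compat_r _ _ _ w0 (avD x y)) _.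
rewrite Rmult_comm -RmaxRmult // Rmult_comm [(w * _)%Re]Rmult_comm; exact: Rmax_lub_lt.
Qed.

Lemma powD_sub {j k : nat} : (j <= k)%N -> (r ^ k = r ^ j * r ^ (k - j))%Re.
Proof. by move=> jk; rewrite -pow_add plusE subnKC. Qed.

Lemma gnM (p q : {poly K}) : gn r (p * q) = (gn r p * gn r q)%Re.
Proof.
have gp := gn_ge0 p; have gq := gn_ge0 q.
apply: Rle_antisym.
  apply: gn_le; first exact: Rmult_le_pos.
  move=> k; rewrite coefM; apply: av_sum_le => //; first exact: Rmult_le_pos.
    exact: pow_le.
  move=> j _; rewrite avM (powD_sub (ltnSE (ltn_ord j))).
  have e : (absv p`_j * absv q`_(k - j) * (r ^ j * r ^ (k - j)) =
    (absv p`_j * r ^ j) * (absv q`_(k - j) * r ^ (k - j)))%Re by ring.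
  rewrite e; apply: Rmult_le_compat; try exact: term_ge0; exact: gn_ge.
case: (Req_dec (gn r p) 0) => [->|np]; first by rewrite Rmult_0_l; exact: gn_ge0.
case: (Req_dec (gn r q) 0) => [->|nq]; first by rewrite Rmult_0_r; exact: gn_ge0.
have pp : (0 < gn r p)%Re by lra.
have pq : (0 < gn r q)%Re by lra.
pose Pp := fun i => if Req_EM_T (absv p`_i * r ^ i)%Re (gn r p) then true else false.
pose Pq := fun i => if Req_EM_T (absv q`_i * r ^ i)%Re (gn r q) then true else false.
have exp : exists i, Pp i.
  by have [i e] := gn_ex p; exists i; rewrite /Pp; case: Req_EM_T => // ?; exfalso; auto.
have exq : exists i, Pq i.
  by have [i e] := gn_ex q; exists i; rewrite /Pq; case: Req_EM_T => // ?; exfalso; auto.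
case: (ex_minnP exp) => i0 hi0 mi0.
case: (ex_minnP exq) => j0 hj0 mj0.
have ei0 : (absv p`_i0 * r ^ i0 = gn r p)%Re by move: hi0; rewrite /Pp; case: Req_EM_T.
have ej0 : (absv q`_j0 * r ^ j0 = gn r q)%Re by move: hj0; rewrite /Pq; case: Req_EM_T.
have lti : forall i, (i < i0)%N -> (absv p`_i * r ^ i < gn r p)%Re.
  move=> i lt; have := gn_ge p i; case/Rle_lt_or_eq_dec => // e.
  by have := mi0 i; rewrite /Pp; case: Req_EM_T => // _ /(_ isT); rewrite leqNgt lt.
have ltj : forall j, (j < j0)%N -> (absv q`_j * r ^ j < gn r q)%Re.
  move=> j lt; have := gn_ge q j; case/Rle_lt_or_eq_dec => // e.
  by have := mj0 j; rewrite /Pq; case: Req_EM_T => // _ /(_ isT); rewrite leqNgt lt.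
pose k := (i0 + j0)%N.
have ik : (i0 < k.+1)%N by rewrite ltnS leq_addr.
have rk : (r ^ k = r ^ i0 * r ^ j0)%Re by rewrite pow_add.
have G0 : (0 < gn r p * gn r q)%Re by apply: Rmult_lt_0_compat.
have rkp : (0 < r ^ k)%Re.
  case: (pow_le r k r0) => // e; exfalso.
  move: G0; rewrite -ei0 -ej0.
  have -> : (absv p`_i0 * r ^ i0 * (absv q`_j0 * r ^ j0) = absv p`_i0 * absv q`_j0 * r ^ k)%Re.
    by rewrite rk; ring.
  rewrite -e; lra.
have hc := gn_ge (p * q) k.
rewrite coefM (bigD1 (Ordinal ik)) //= in hc.
rewrite /k addKn in hc.
set S := (\sum_(i < _ | _) _) in hc.
have hS : (absv S * r ^ k < gn r p * gn r q)%Re.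
  apply: av_sum_lt => //; first exact: pow_le.
  move=> j; rewrite -val_eqE /= => nj.
  rewrite avM (powD_sub (ltnSE (ltn_ord j))).
  have e : (absv p`_j * absv q`_(k - j) * (r ^ j * r ^ (k - j)) =
    (absv p`_j * r ^ j) * (absv q`_(k - j) * r ^ (k - j)))%Re by ring.
  rewrite e.
  have t1 := term_ge0 p j; have t2 := term_ge0 q (k - j).
  have g1 := gn_ge p j; have g2 := gn_ge q (k - j).
  have [lt|gt] := ltnP j i0.
    have := lti j lt; nra.
  have gt' : (i0 < j)%N by rewrite ltn_neqAle eq_sym nj gt.
  have kj : (k - j < j0)%N.
    move: (ltn_ord j) => jk.
    rewrite ltn_subLR; last by rewrite -ltnS.
    by rewrite /k ltn_add2r.
  have := ltj _ kj; nra.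
have ex : (absv (p`_i0 * q`_j0) * r ^ k = gn r p * gn r q)%Re.
  by rewrite avM -ei0 -ej0 rk; ring.
have hS' : (absv S < absv (p`_i0 * q`_j0))%Re.
  apply: (Rmult_lt_reg_r (r ^ k)) => //; lra.
rewrite avD_lt // ex in hc.
exact: hc. Qed.

End GN.

Lemma gn_mono r s (q : {poly K}) : (0 <= r)%Re -> (r <= s)%Re -> (gn r q <= gn s q)%Re.
Proof.
move=> r0 rs; have [i ->] := gn_ex r r0 q.
have s0 : (0 <= s)%Re by lra.
apply: Rle_trans (gn_ge s s0 q i); apply: Rmult_le_compat_l; first exact: av_ge0.
by apply: pow_incr; lra.
Qed.


Definition rprod (F : K -> R) (l : seq K) : R := foldr (fun b acc => (F b * acc)%Re) 1%Re l.

Lemma rprod_ge0 F l : (forall b, 0 <= F b)%Re -> (0 <= rprod F l)%Re.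
Proof. move=> h; elim: l => [|b l IH] /=; [lra| exact: Rmult_le_pos]. Qed.
Lemma rprod_le F G l : (forall b, 0 <= F b)%Re -> (forall b, F b <= G b)%Re -> (rprod F l <= rprod G l)%Re.
Proof.
move=> h0 h; elim: l => [|b l IH] /=; first lra.
apply: Rmult_le_compat => //; first exact: rprod_ge0.
Qed.
Lemma rprod_eq F G l : (forall b, b \in l -> F b = G b) -> rprod F l = rprod G l.
Proof.
elim: l => [|b l IH] h //=; rewrite h ?mem_head // IH // => x xl; apply: h.
by rewrite in_cons xl orbT.
Qed.
Lemma rprodM F G l : rprod (fun b => F b * G b)%Re l = (rprod F l * rprod G l)%Re.
Proof. elim: l => [|b l IH] /=; [ring| rewrite IH; ring]. Qed.
Lemma rprodC c l : rprod (fun _ => c) l = (c ^ size l)%Re.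
Proof. by elim: l => [|b l IH] //=; rewrite IH. Qed.

Lemma ms_prod (s : {poly K} -> R) (G : K -> {poly K}) c l :
  mult_seminorm absv s ->
  s (c *: \prod_(b <- l) G b) = (absv c * rprod (fun b => s (G b)) l)%Re.
Proof.
case=> _ [sC [sM _]].
rewrite -mul_polyC sM sC; congr (_ * _)%Re.
elim: l => [|b l IH]; first by rewrite big_nil /= -[1]/(1%:P) sC av1.
by rewrite big_cons sM IH.
Qed.

Lemma poly_fact (p : {poly K}) : exists l : seq K,
  p = lead_coef p *: \prod_(b <- l) ('X - b%:P) /\ (p != 0 -> size l = (size p).-1).
Proof.
case: (closed_field_poly_normal p) => l e; exists l; split => // nz.
by rewrite {1}e size_scale ?lead_coef_eq0 // size_prod_XsubC.
Qed.

Lemma ms_eq (s t : {poly K} -> R) : mult_seminorm absv s -> mult_seminorm absv t ->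
  (forall b, s ('X - b%:P) = t ('X - b%:P)) -> s = t.
Proof.
move=> hs ht h; apply: functional_extensionality => p.
have [l [e _]] := poly_fact p.
rewrite e (ms_prod _ _ _ _ hs) (ms_prod _ _ _ _ ht); congr (_ * _)%Re.
by apply: rprod_eq => b _; apply: h.
Qed.

Lemma ms_le (s t : {poly K} -> R) : mult_seminorm absv s -> mult_seminorm absv t ->
  (forall b, Rle (s ('X - b%:P)) (t ('X - b%:P))) -> forall p, (s p <= t p)%Re.
Proof.
move=> hs ht h p.
have [l [e _]] := poly_fact p.
rewrite e (ms_prod _ _ _ _ hs) (ms_prod _ _ _ _ ht).
apply: Rmult_le_compat_l; first exact: av_ge0.
apply: rprod_le => // b; by case: hs => [h0 _]; apply: h0.
Qed.

Lemma gn_ms r : (0 <= r)%Re -> mult_seminorm absv (gn r).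
Proof.
move=> r0; split; first exact: gn_ge0.
split; first exact: gnC.
split; first exact: gnM.
exact: gnD.
Qed.

Definition zf (c : K) (Rr : R) : {poly K} -> R := fun p => gn Rr (p \Po ('X + c%:P)).

Lemma zetaF c Rr : zeta absv c Rr = Some (zf c Rr).
Proof. by []. Qed.

Lemma zf_ms c Rr : (0 <= Rr)%Re -> mult_seminorm absv (zf c Rr).
Proof.
move=> r0; rewrite /zf; split; first by move=> p; exact: gn_ge0.
split; first by move=> a; rewrite comp_polyC (gnC _ r0).
split; first by move=> p q; rewrite comp_polyM (gnM _ r0).
by move=> p q; rewrite comp_polyD; apply: gnD.
Qed.

Lemma zeta_berk c Rr : (0 <= Rr)%Re -> is_berk absv (zeta absv c Rr).
Proof. exact: zf_ms. Qed.

Lemma zf0 Rr : zf 0 Rr = gn Rr.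
Proof. by apply: functional_extensionality => p; rewrite /zf polyC0 addr0 comp_polyXr. Qed.

Lemma gnXa Rr a : (0 <= Rr)%Re -> gn Rr ('X + a%:P) = Rmax (absv a) Rr.
Proof.
move=> r0; apply: Rle_antisym.
  apply: gn_le => //; first by apply: Rle_trans (Rmax_r _ _).
  case=> [|[|i]]; rewrite coefD coefX coefC /=.
  - by rewrite add0r Rmult_1_r; apply: Rmax_l.
  - by rewrite addr0 av1 Rmult_1_l Rmult_1_r; apply: Rmax_r.
  - by rewrite addr0 av0 Rmult_0_l; apply: Rle_trans (Rmax_r _ _).
apply: Rmax_lub.
  by have := gn_ge Rr r0 ('X + a%:P) 0; rewrite coefD coefX coefC /= add0r Rmult_1_r.
by have := gn_ge Rr r0 ('X + a%:P) 1; rewrite coefD coefX coefC /= addr0 av1 Rmult_1_l Rmult_1_r.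
Qed.

Lemma zf_lin c Rr b : (0 <= Rr)%Re -> zf c Rr ('X - b%:P) = Rmax (absv (c - b)) Rr.
Proof.
move=> r0; rewrite /zf comp_polyB comp_polyX comp_polyC -addrA -polyCB.
exact: gnXa.
Qed.

Lemma zf_X c Rr : (0 <= Rr)%Re -> zf c Rr 'X = Rmax (absv c) Rr.
Proof. by move=> r0; rewrite /zf comp_polyX (gnXa _ _ r0). Qed.


Lemma le_refl (x : berk K) : le_inf x x.
Proof. by case: x => [s|] //= f; apply: Rle_refl. Qed.
Lemma le_trans (x y z : berk K) : le_inf x y -> le_inf y z -> le_inf x z.
Proof.
case: z => [u|] //; case: y => [t|] //; case: x => [s|] //= h1 h2 f.
exact: Rle_trans (h1 f) (h2 f).
Qed.
Lemma le_antisym (x y : berk K) : le_inf x y -> le_inf y x -> x = y.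
Proof.
case: y => [t|]; case: x => [s|] //= h1 h2.
by congr Some; apply: functional_extensionality => f; apply: Rle_antisym.
Qed.

Lemma seg_unique {G u m : berk K} : is_berk absv G ->
  in_seg absv u G m -> in_seg absv m G u -> m = u.
Proof.
move=> hG [bm [A C]] [bu [B D]].
case: A => A.
  case: B => B; first exact: le_antisym.
  apply: le_antisym => //; apply: C => //; exact: le_refl.
have uG : le_inf G u by case: B => // B; exact: le_trans A B.
have mu : le_inf m u by apply: C => //; exact: le_refl.
apply: le_antisym => //; apply: D => //; exact: le_refl.
Qed.

Lemma seg_self {x G y : berk K} : in_seg absv x G y -> in_seg absv y G y.
Proof. case=> hb _; split => //; split; [left; exact: le_refl| by []]. Qed.

Lemma joinG_eq (x y : berk K) : is_berk absv (zetaG absv) -> in_seg absv x (zetaG absv) y ->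
  joinG absv x y = y /\ joinG absv y x = y.
Proof.
move=> hG hy; have hyy := seg_self hy.
split.
  rewrite /joinG.
  set P := (fun m => _).
  have Py : P y by split; [| split].
  have := epsilon_spec (inhabits None) P (ex_intro _ y Py).
  set m := epsilon _ _ => [[_ [h2 h3]]].
  exact: seg_unique hG h2 (h3 y hy hyy).
rewrite /joinG.
set P := (fun m => _).
have Py : P y by split; [| split].
have := epsilon_spec (inhabits None) P (ex_intro _ y Py).
set m := epsilon _ _ => [[h1 [_ h3]]].
exact: seg_unique hG h1 (h3 y hyy hy).
Qed.

Lemma Rinf_eq (E : R -> Prop) m : is_glb E m -> Rinf E = m.
Proof.
move=> h; rewrite /Rinf.
have := epsilon_spec (inhabits 0%Re) (is_glb E) (ex_intro _ m h).
set v := epsilon _ _ => hv.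
have := is_lub_u _ _ _ hv h; lra.
Qed.

Lemma diam_zeta c Rr : (0 <= Rr)%Re ->
  diamG (zeta absv c Rr) = (Rr / (Rmax 1 (Rmax (absv c) Rr)) ^ 2)%Re.
Proof.
move=> r0; rewrite zetaF /diamG (zf_X _ _ r0); congr (_ / _)%Re.
apply: Rinf_eq; split.
  move=> t [a e]; rewrite (zf_lin _ _ _ r0) in e.
  apply: Ropp_le_cancel; rewrite Ropp_involutive e; exact: Rmax_r.
move=> b hb; have := hb (- Rr)%Re; rewrite Ropp_involutive => h.
suff : (- Rr <= b)%Re by lra.
apply: h; exists c; rewrite (zf_lin _ _ _ r0) subrr av0 Rmax_right //.
Qed.


Section Homog.
Variables P Q : {poly K}.

Definition HH (N : nat) (g : {poly K}) : {poly K} :=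
  \sum_(i < N.+1) g`_i *: (P ^+ i * Q ^+ (N - i)).

Lemma homogE (f : {poly K}) : homog P Q f = HH (size f).-1 f.
Proof.
rewrite /homog /HH; case sf: (size f) => [|n] /=; last by [].
rewrite big_ord0 big_ord1 nth_default ?sf // scale0r //.
Qed.

Lemma HH_add N (g h : {poly K}) : HH N (g + h) = HH N g + HH N h.
Proof. by rewrite /HH -big_split /=; apply: eq_bigr => i _; rewrite coefD scalerDl. Qed.
Lemma HH_scale N c (g : {poly K}) : HH N (c *: g) = c *: HH N g.
Proof. by rewrite /HH scaler_sumr; apply: eq_bigr => i _; rewrite coefZ scalerA. Qed.

Lemma HH_X N (g : {poly K}) : HH N.+1 (g * 'X) = P * HH N g.
Proof.
rewrite /HH big_ord_recl coefMX /= scale0r add0r mulr_sumr; apply: eq_bigr => i _.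
by rewrite coefMX /= /bump /= add1n subSS exprS -mulrA scalerAr.
Qed.

Lemma HH_sh N (g : {poly K}) : (size g <= N.+1)%N -> HH N.+1 g = Q * HH N g.
Proof.
move=> sg; rewrite /HH big_ord_recr /= nth_default // scale0r addr0 mulr_sumr.
apply: eq_bigr => i _; rewrite subSn; last by rewrite -ltnS.
by rewrite exprS mulrCA scalerAr.
Qed.

Lemma HH_lin N (g : {poly K}) b : (size g <= N.+1)%N ->
  HH N.+1 (g * ('X - b%:P)) = HH N g * (P - b *: Q).
Proof.
move=> sg.
have -> : g * ('X - b%:P) = g * 'X + - (b *: g) by rewrite mulrBr [g * b%:P]mulrC mul_polyC.
rewrite HH_add -scaleNr HH_scale HH_X HH_sh //.
rewrite mulrBr scaleNr -scalerAr mulrC [Q * _]mulrC; congr (_ - _); by rewrite scalerAl.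
Qed.

Lemma HH_prod l c : HH (size l) (c *: \prod_(b <- l) ('X - b%:P)) = c *: \prod_(b <- l) (P - b *: Q).
Proof.
elim: l c => [|b l IH] c.
  by rewrite !big_nil /HH big_ord1 coefZ coef1 /= mulr1 !expr0 mulr1 alg_polyC.
rewrite !big_cons /= scalerAr mulrC HH_lin.
  by rewrite IH -scalerAl mulrC.
apply: leq_trans (size_scale_leq _ _) _.
by rewrite size_prod_XsubC.
Qed.

Lemma homog_fact (f : {poly K}) l : f != 0 -> f = lead_coef f *: \prod_(b <- l) ('X - b%:P) ->
  size l = (size f).-1 -> homog P Q f = lead_coef f *: \prod_(b <- l) (P - b *: Q).
Proof.
move=> nz e sl; rewrite homogE -sl {1}e HH_prod //.
Qed.

End Homog.


Fixpoint goodn (us : seq K) : Prop :=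
  match us with
  | [::] => True
  | u :: us' => (absv u <= 1)%Re /\ (forall v, v \in us' -> absv (u - v) = 1%Re) /\ goodn us'
  end.

Lemma gn1_XsubC u : (absv u <= 1)%Re -> gn 1 ('X - u%:P) = 1%Re.
Proof.
move=> h; rewrite -polyCN (gnXa _ _ (Rle_0_1)) avN Rmax_right //.
Qed.

Lemma interp (us : seq K) : goodn us -> forall (G : {poly K}) M,
  (size G <= size us)%N -> (0 <= M)%Re -> (forall u, u \in us -> absv G.[u] <= M)%Re ->
  (gn 1 G <= M)%Re.
Proof.
elim: us => [|u us IH] /= hg G M sG M0 hG.
  by move: sG; rewrite leqn0 size_poly_eq0 => /eqP ->; rewrite (gn0 _ Rle_0_1).
case: hg => [hu [hd hg]].
have rt : root (G - G.[u]%:P) u by apply/rootP; rewrite hornerD hornerN hornerC subrr.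
case/factor_theorem: rt => G1 e.
have eG : G = G1 * ('X - u%:P) + G.[u]%:P by rewrite -e subrK.
have sG1 : (size G1 <= size us)%N.
  have [->|nz] := eqVneq G1 0; first by rewrite size_poly0.
  have := size_polyD G (- G.[u]%:P); rewrite e size_Mmonic ?monicXsubC // size_XsubC addn2 /=.
  rewrite size_polyN => h; rewrite -ltnS; apply: leq_trans h _.
  rewrite geq_max sG /=; apply: leq_trans (size_polyC_leq1 _) _; done.
have h1 : (gn 1 G1 <= M)%Re.
  apply: IH => // v vin.
  have ev : G.[v] - G.[u] = G1.[v] * (v - u).
    by rewrite -[G.[u]](hornerC _ v) -hornerN -hornerD e hornerM hornerXsubC.
  have : absv (G.[v] - G.[u]) = absv G1.[v].
    by rewrite ev avM avB hd // Rmult_1_r.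
  move=> <-; apply: avB_le; [apply: hG; by rewrite in_cons vin orbT| apply: hG; by rewrite mem_head].
rewrite eG; apply: Rle_trans (gnD _ Rle_0_1 _ _) _; apply: Rmax_lub.
  by rewrite (gnM _ Rle_0_1) gn1_XsubC // Rmult_1_r.
by rewrite (gnC _ Rle_0_1); apply: hG; rewrite mem_head.
Qed.

Lemma av_prod (F : K -> K) (l : seq K) : absv (\prod_(v <- l) F v) = rprod (fun v => absv (F v)) l.
Proof. by elim: l => [|b l IH]; rewrite ?big_nil ?av1 // big_cons avM IH. Qed.

Lemma rprod_ge0' F l : (forall b, b \in l -> 0 <= F b)%Re -> (0 <= rprod F l)%Re.
Proof.
elim: l => [|b l IH] h /=; first lra.
apply: Rmult_le_pos; first by apply: h; rewrite mem_head.
by apply: IH => v vl; apply: h; rewrite in_cons vl orbT.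
Qed.
Lemma rprod_le1 F l : (forall b, b \in l -> 0 <= F b <= 1)%Re -> (rprod F l <= 1)%Re.
Proof.
elim: l => [|b l IH] h /=; first lra.
have hb := h b (mem_head _ _).
have h' : forall v, v \in l -> (0 <= F v <= 1)%Re by move=> v vl; apply: h; rewrite in_cons vl orbT.
have := IH h'; have := rprod_ge0' F l (fun v vl => proj1 (h' v vl)); nra.
Qed.
Lemma rprod_eq1 F l : (forall b, b \in l -> 0 <= F b <= 1)%Re -> rprod F l = 1%Re -> forall v, v \in l -> F v = 1%Re.
Proof.
elim: l => [|b l IH] h //= e v.
have hb := h b (mem_head _ _).
have h' : forall v, v \in l -> (0 <= F v <= 1)%Re by move=> w wl; apply: h; rewrite in_cons wl orbT.
have r1 := rprod_le1 F l h'; have r0 := rprod_ge0' F l (fun v vl => proj1 (h' v vl)).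
have fb : F b = 1%Re by nra.
have rl : rprod F l = 1%Re by nra.
rewrite in_cons => /orP[/eqP -> //|vl]; exact: IH.
Qed.

Lemma nodes_ex n : exists us : seq K, size us = n /\ goodn us.
Proof.
elim: n => [|n [us [sus hus]]]; first by exists [::].
have [u [hu hd]] : exists u, (absv u <= 1)%Re /\ forall v, v \in us -> absv (u - v) = 1%Re.
  case: n sus => [|n] sus.
    by exists 0; move: sus; case: us {hus} => // _; rewrite av0; split=> //; lra.
  pose h := \prod_(v <- us) ('X - v%:P) - 1.
  have sh : size h = n.+2.
    have sp : size (\prod_(v <- us) ('X - v%:P)) = n.+2 by rewrite (size_prod_XsubC _ id) sus.
    by rewrite /h size_polyDl sp // size_polyN size_poly1.
  have : size h != 1%N by rewrite sh.
  case/closed_rootP => u /rootP; rewrite /h hornerD hornerN hornerC horner_prod => /eqP.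
  rewrite subr_eq0 => /eqP ep.
  have ap : rprod (fun v => absv (u - v)) us = 1%Re.
    have ep' : \prod_(v <- us) (u - v) = 1.
      rewrite -[RHS]ep; apply: eq_bigr => v _; by rewrite hornerXsubC.
    by rewrite -av_prod ep' av1.
  have uv : forall v, v \in us -> (absv v <= 1)%Re.
    clear -hus; elim: us hus => [|b l IH] //= [hb [_ hl]] v; rewrite in_cons => /orP[/eqP ->//|vl].
    exact: IH.
  have u1 : (absv u <= 1)%Re.
    apply: Rnot_lt_le => lt.
    have : rprod (fun v => absv (u - v)) us = rprod (fun _ => absv u) us.
      apply: rprod_eq => v vin; rewrite avD_lt // avN; have := uv v vin; lra.
    rewrite ap rprodC sus => e.
    have := Rlt_pow_R1 (absv u) n.+1 lt (Nat.lt_0_succ n); lra.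
  exists u; split => //.
  apply: (rprod_eq1 (fun v => absv (u - v))) => // v vin; split; first exact: av_ge0.
  by apply: avB_le => //; apply: uv.
exists (u :: us); split; first by rewrite /= sus.
by split.
Qed.


Lemma small_elt : exists x : K, (0 < absv x < 1)%Re.
Proof.
case: Habs => _ [_ [_ [_ [[x0 [h0 h1]] _]]]].
have p0 := av_ge0 x0.
case: (Rlt_le_dec (absv x0) 1) => h.
  by exists x0; lra.
exists x0^-1; rewrite avV; split.
  apply: Rinv_0_lt_compat; lra.
rewrite -Rinv_1; apply: Rinv_lt_contravar; lra.
Qed.

Lemma pow_small (th y : R) : (0 <= th < 1)%Re -> (0 < y)%Re -> exists N : nat, (th ^ N < y)%Re.
Proof.
move=> h hy; have : (Rabs th < 1)%Re by rewrite Rabs_right; lra.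
move=> a; have [N HN] := pow_lt_1_zero th a y hy.
exists N; have := HN N (le_n N); rewrite Rabs_right //; apply: Rle_ge; apply: pow_le; lra.
Qed.

Lemma density (t B : R) : (0 < t)%Re -> (t < B)%Re -> exists a : K, (t < absv a < B)%Re.
Proof.
move=> t0 tB.
have [x [x0 x1]] := small_elt.
have [N HN] : exists N : nat, ((t / B) ^ N.+1 < absv x)%Re.
  have q0 : (0 <= t / B < 1)%Re.
    split; first by apply: Rlt_le; apply: Rdiv_lt_0_compat; lra.
    apply: (Rmult_lt_reg_r B); first lra. rewrite /Rdiv Rmult_assoc Rinv_l; lra.
  have [N HN] := pow_small _ _ q0 x0.
  exists N; apply: Rle_lt_trans HN; rewrite /= -[X in (_ <= X)%Re]Rmult_1_l.
  apply: Rmult_le_compat_r; [apply: pow_le| ]; lra.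
have : size ('X^(N.+1) - x%:P) != 1%N by rewrite size_XnsubC.
case/closed_rootP => y /rootP; rewrite hornerD hornerN hornerXn hornerC => /eqP.
rewrite subr_eq0 => /eqP ey.
have eth : (absv y ^ N.+1 = absv x)%Re by rewrite -avX ey.
set th := absv y in eth.
have th0 : (0 <= th)%Re by apply: av_ge0.
have th1 : (th < 1)%Re.
  apply: Rnot_le_lt => h; have := pow_R1_Rle th N.+1 h; lra.
have thp : (0 < th)%Re.
  case: th0 => // e; rewrite -e pow_i in eth; [lra| lia].
have thB : (t / B < th)%Re.
  apply: Rnot_le_lt => h.
  have := pow_incr th (t / B) N.+1 (conj th0 h); lra.
have yn0 : y != 0 by apply/eqP => e; move: thp; rewrite /th e av0; lra.
have [M HM] := pow_small th (/ B) (conj th0 th1) (Rinv_0_lt_compat _ (Rlt_trans _ _ _ t0 tB)).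
have thM : (0 < th ^ M)%Re by apply: pow_lt.
have [k Hk] := pow_small th (B * th ^ M) (conj th0 th1) (Rmult_lt_0_compat _ _ (Rlt_trans _ _ _ t0 tB) thM).
pose e := fun k : nat => (y^-1) ^+ M * y ^+ k.
have ee : forall k, absv (e k) = (th ^ k / th ^ M)%Re.
  move=> j; rewrite /e avM !avX avV -/th /Rdiv Rmult_comm; congr (_ * _)%Re.
  by rewrite pow_inv.
pose PP := fun j => if Rlt_dec (absv (e j)) B then true else false.
have exP : exists j, PP j.
  exists k; rewrite /PP; case: Rlt_dec => // n; exfalso; apply: n.
  rewrite ee; apply: (Rmult_lt_reg_r (th ^ M)) => //.
  by rewrite /Rdiv Rmult_assoc Rinv_l; lra.
case: (ex_minnP exP) => k0 Pk0 mk0.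
have lt0 : (absv (e k0) < B)%Re by move: Pk0; rewrite /PP; case: Rlt_dec.
case: k0 Pk0 mk0 lt0 => [|k'] Pk0 mk0 lt0.
  exfalso; move: lt0; rewrite ee /= /Rdiv Rmult_1_l => h.
  have B0 : (0 < B)%Re by lra.
  have a1 : (1 < B * th ^ M)%Re.
    have := Rmult_lt_compat_r (th ^ M) _ _ thM h; rewrite Rinv_l; lra.
  have a2 : (B * th ^ M < 1)%Re.
    have := Rmult_lt_compat_l B _ _ B0 HM; rewrite Rinv_r; lra.
  lra.
have ge : (B <= absv (e k'))%Re.
  apply: Rnot_lt_le => h; have := mk0 k'; rewrite /PP; case: Rlt_dec => // _ /(_ isT).
  by rewrite ltnn.
exists (e k'.+1); split => //.
have : absv (e k'.+1) = (absv (e k') * th)%Re.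
  by rewrite !ee /= /Rdiv; ring.
move=> ->.
have : (t < B * th)%Re.
  have B0 : (0 < B)%Re by lra.
  have := Rmult_lt_compat_r B _ _ B0 thB.
  have -> : (t / B * B = t)%Re by field; lra.
  lra.
nra.
Qed.


Lemma bernoulli (d : R) (k : nat) : (0 <= d <= 1)%Re -> (1 - INR k * d <= (1 - d) ^ k)%Re.
Proof.
move=> h; elim: k => [|k IH] /=; first lra.
rewrite -/(INR k.+1) S_INR.
have p : (0 <= 1 - d)%Re by lra.
have := Rmult_le_compat_l _ _ _ p IH.
have := pos_INR k; nra.
Qed.

Lemma sup_bound (c : R) (k : nat) B M : (0 < B)%Re -> (0 <= c)%Re -> (0 <= M)%Re ->
  (forall a : K, absv a < B -> c * absv a ^ k <= M)%Re -> (c * B ^ k <= M)%Re.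
Proof.
move=> B0 c0 M0 h; apply: Rnot_lt_le => lt.
set X := (c * B ^ k)%Re in lt.
have X0 : (0 < X)%Re by lra.
have kp := pos_INR k.
set d := ((X - M) / (X * (INR k + 2)))%Re.
have d0 : (0 < d)%Re.
  apply: Rdiv_lt_0_compat; [lra| apply: Rmult_lt_0_compat; lra].
have dk : (X * (INR k + 2) * d = X - M)%Re by rewrite /d; field; split; lra.
have d1 : (d <= 1/2)%Re.
  apply: Rnot_lt_le => hh.
  have Y0 : (0 < X * (INR k + 2))%Re by apply: Rmult_lt_0_compat; lra.
  have : (X * (INR k + 2) * (1/2) < X * (INR k + 2) * d)%Re by apply: Rmult_lt_compat_l.
  have : (X <= X * (INR k + 2) * (1/2))%Re by nra.
  lra.
have t0 : (0 < B * (1 - d))%Re by apply: Rmult_lt_0_compat; lra.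
have tB : (B * (1 - d) < B)%Re by nra.
have [a [ha1 ha2]] := density _ _ t0 tB.
have ha := h a ha2.
have bern := bernoulli d k ltac:(lra).
have e1 : ((B * (1 - d)) ^ k <= absv a ^ k)%Re.
  apply: pow_incr; split; lra.
have e2 : (X * (1 - INR k * d) <= c * absv a ^ k)%Re.
  apply: Rle_trans (_ : c * (B * (1 - d)) ^ k <= _)%Re; last first.
    by apply: Rmult_le_compat_l.
  rewrite Rpow_mult_distr /X -Rmult_assoc; apply: Rmult_le_compat_l => //.
  apply: Rmult_le_pos => //; apply: pow_le; lra.
have e3 : (X * (1 - INR k * d) > M)%Re.
  have : (X * INR k * d < X - M)%Re.
    rewrite -dk. have : (0 < X * d)%Re by nra. nra.
  nra.
lra.
Qed.


Lemma zetaG_def : zetaG absv = zeta absv 0 1.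
Proof. by []. Qed.

Lemma zeta_le c r s : (0 <= r)%Re -> (r <= s)%Re -> le_inf (zeta absv c r) (zeta absv c s).
Proof. by move=> r0 rs f; apply: gn_mono. Qed.

Lemma seg0 r s : (0 <= r)%Re -> (r <= s)%Re -> (s <= 1)%Re ->
  in_seg absv (zeta absv 0 r) (zetaG absv) (zeta absv 0 s).
Proof.
move=> r0 rs s1; split; first by apply: zeta_berk; lra.
split; first by left; apply: zeta_le.
move=> w _ _ hG; apply: le_trans hG; rewrite zetaG_def; apply: zeta_le => //; lra.
Qed.

Lemma segc c R1 R2 : (1 <= absv c)%Re -> (0 <= R1)%Re -> (R1 <= R2)%Re -> (R2 <= absv c)%Re ->
  in_seg absv (zeta absv c R1) (zetaG absv) (zeta absv c R2).
Proof.
move=> c1 r0 r12 r2c; split; first by apply: zeta_berk; lra.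
split; first by left; apply: zeta_le.
case=> [t|] // bt h1 h2.
have r2 : (0 <= R2)%Re by lra.
move=> f; change (zf c R2 f <= t f)%Re.
apply: (ms_le _ _ (zf_ms c R2 r2) bt) => b.
have hcb : Rle (zf c R1 ('X - b%:P)) (t ('X - b%:P)) := h1 _.
have hb : Rle (zf 0 1 ('X - b%:P)) (t ('X - b%:P)) := h2 _.
rewrite (zf_lin _ _ _ r0) in hcb; rewrite (zf_lin _ _ _ Rle_0_1) sub0r avN in hb.
rewrite (zf_lin _ _ _ r2).
have e1 := Rmax_l (absv (c - b)) R1.
have e2 := Rmax_l (absv b) 1.
apply: Rmax_lub; first lra.
case: (Rle_lt_dec R2 (absv (c - b))) => h; first lra.
have : absv b = absv c.
  have -> : b = c + - (c - b) by rewrite opprB addrC subrK.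
  by rewrite avD_lt // avN; lra.
lra.
Qed.

Lemma clpt0_le B : (0 <= B)%Re -> le_inf (clpt absv (Some 0)) (zeta absv 0 B).
Proof.
move=> b0 p; change (absv p.[0] <= zf 0 B p)%Re; rewrite zf0 horner_coef0.
by have := gn_ge B b0 p 0; rewrite /= Rmult_1_r.
Qed.

Lemma seg_class B z : (0 <= B)%Re ->
  in_seg absv (clpt absv (Some 0)) (zeta absv 0 B) z -> exists r, (0 <= r <= B)%Re /\ z = zeta absv 0 r.
Proof.
move=> b0 [bz [A C]].
have zZ : le_inf z (zeta absv 0 B).
  apply: C; [exact: zeta_berk| exact: clpt0_le| exact: le_refl].
case: A => A; last first.
  by exists B; split; [lra| apply: le_antisym].
case: z bz A C zZ => [s|] // bs A _ zZ.
have ms := bs.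
case: bs => [s0 [sC [sM sD]]].
set r := s 'X.
have r0 : (0 <= r)%Re by apply: s0.
have rB : (r <= B)%Re.
  have : Rle (s 'X) (zf 0 B 'X) := zZ 'X.
  by rewrite (zf_X _ _ b0) av0 Rmax_right.
exists r; split; first by split.
rewrite zetaF; congr Some; apply: (ms_eq _ _ ms (zf_ms 0 r r0)) => b.
rewrite (zf_lin _ _ _ r0) sub0r avN.
have lo : Rle (absv b) (s ('X - b%:P)).
  by have : Rle (absv ('X - b%:P).[0]) (s ('X - b%:P)) := A _; rewrite hornerXsubC sub0r avN.
have hi : Rle (s ('X - b%:P)) (Rmax r (absv b)).
  by have := sD 'X (- b%:P); rewrite -polyCN sC avN.
case: (Rlt_le_dec (absv b) r) => h.
  have : Rle r (Rmax (s ('X - b%:P)) (absv b)).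
    by have := sD ('X - b%:P) b%:P; rewrite subrK sC.
  move=> h3; rewrite [Rmax (absv b) r]Rmax_right; last lra.
  rewrite Rmax_left in hi; last lra.
  apply: Rle_antisym => //; move: h3; rewrite /Rmax; case: Rle_dec => hh'; lra.
rewrite Rmax_right in hi; last lra.
rewrite Rmax_left; lra.
Qed.


Lemma gn_zero (q : {poly K}) : gn 0%Re q = absv q`_0.
Proof.
apply: Rle_antisym.
  apply: (gn_le 0%Re); first exact: av_ge0.
  case=> [|i] /=; first lra.
  rewrite Rmult_0_l Rmult_0_r; exact: av_ge0.
by have := gn_ge 0%Re (Rle_refl 0%Re) q 0; rewrite /= Rmult_1_r.
Qed.

Lemma gn_horner (q : {poly K}) z : (absv q.[z] <= gn (absv z) q)%Re.
Proof.
have z0 := av_ge0 z.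
rewrite horner_coef -[absv _]Rmult_1_r; apply: av_sum_le => //; first exact: gn_ge0.
  lra.
move=> i _; rewrite avM avX Rmult_1_r; exact: gn_ge.
Qed.

Lemma pow_diff (r s : R) (k : nat) : (0 <= r)%Re -> (r <= s)%Re ->
  (s ^ k.+1 - r ^ k.+1 <= INR k.+1 * s ^ k * (s - r))%Re.
Proof.
move=> r0 rs; elim: k => [|k IH].
  rewrite /=; lra.
have e1 : (s ^ k.+2 - r ^ k.+2 = s * (s ^ k.+1 - r ^ k.+1) + r ^ k.+1 * (s - r))%Re by rewrite /=; ring.
rewrite e1 -/(INR k.+2) S_INR.
have h1 : (s * (s ^ k.+1 - r ^ k.+1) <= s * (INR k.+1 * s ^ k * (s - r)))%Re.
  apply: Rmult_le_compat_l => //; lra.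
have h2 : (r ^ k.+1 <= s ^ k.+1)%Re by apply: pow_incr; lra.
have h3 : (0 <= s - r)%Re by lra.
have e2 : (s * (INR k.+1 * s ^ k * (s - r)) = INR k.+1 * s ^ k.+1 * (s - r))%Re by rewrite /=; ring.
have e3 : ((INR k.+1 + 1) * s ^ k.+1 * (s - r) = INR k.+1 * s ^ k.+1 * (s - r) + s ^ k.+1 * (s - r))%Re by ring.
rewrite e3; have := Rmult_le_compat_r _ _ _ h3 h2; lra.
Qed.


Lemma goodn_le1 us : goodn us -> forall u, u \in us -> (absv u <= 1)%Re.
Proof.
elim: us => [|b l IH] //= [hb [_ hl]] v; rewrite in_cons => /orP[/eqP ->//|vl].
exact: IH.
Qed.

Section Main.
Variables (P Q : {poly K}) (B0 : R) (c0 : K) (Rr : R).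
Hypothesis HB0 : B0_of absv P Q B0.
Hypothesis Hc0 : phi_cl P Q (Some 0) = Some c0.
Hypothesis HR0 : (0 < Rr)%Re.
Hypothesis Himg1 : forall z : K, odisc absv 0 B0 z -> phi_cl P Q (Some z) <> None.
Hypothesis Himg2 : forall w : K, (exists z : K, odisc absv 0 B0 z /\ phi_cl P Q (Some z) = Some w)
                         <-> odisc absv c0 Rr w.
Hypothesis Hc0big : (1 < absv c0)%Re.
Hypothesis HRc0 : (Rr <= absv c0)%Re.

Lemma Q0_nz : Q.[0] != 0.
Proof. by move: Hc0; rewrite /phi_cl; case: eqP. Qed.
Lemma c0E : c0 = P.[0] / Q.[0].
Proof. by move: Hc0; rewrite /phi_cl; case: eqP => // _ [<-]. Qed.

Lemma B0_pos : (0 < B0 <= 1)%Re.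
Proof.
case: HB0 => ub lub; split.
  apply: Rnot_le_lt => h.
  have : is_upper_bound (B0set absv P Q) (B0 - 1)%Re.
    rewrite /is_upper_bound => r hr; exfalso; have := ub r hr.
    by case: hr => [[r0 _] _]; lra.
  move/lub; lra.
by apply: lub; rewrite /is_upper_bound => r [[_ r1] _].
Qed.

Definition g0 := absv Q.[0].
Definition ff := P - c0 *: Q.

Lemma g0_pos : (0 < g0)%Re.
Proof. exact: av_gt0 Q0_nz. Qed.

Lemma Qz_nz z : (absv z < B0)%Re -> Q.[z] != 0.
Proof.
move=> h; have : odisc absv 0 B0 z by rewrite /odisc subr0.
move/Himg1; rewrite /phi_cl; by case: eqP.
Qed.

Lemma Qroot_big b : root Q b -> (B0 <= absv b)%Re.
Proof.
move=> /rootP rb; apply: Rnot_lt_le => h; have := Qz_nz b h; by rewrite rb eqxx.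
Qed.

Lemma gnQ r : (0 <= r)%Re -> (r <= B0)%Re -> gn r Q = g0.
Proof.
move=> r0 rB.
have Qnz : Q != 0 by apply: contraNneq Q0_nz => ->; rewrite horner0.
have [l [e _]] := poly_fact Q.
have lnz : lead_coef Q != 0 by rewrite lead_coef_eq0.
rewrite /g0 horner_coef0 -gn_zero e.
rewrite (ms_prod _ _ _ _ (gn_ms r r0)) (ms_prod _ _ _ _ (gn_ms 0%Re (Rle_refl 0%Re))); congr (_ * _)%Re.
apply: rprod_eq => b bl.
have rb : root Q b by rewrite e rootZ // root_prod_XsubC.
have := Qroot_big b rb => hb.
rewrite -polyCN (gnXa _ _ r0) (gnXa _ _ (Rle_refl 0%Re)) avN Rmax_left; last lra.
by rewrite Rmax_left //; exact: av_ge0.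
Qed.

Lemma ff_bound z : (absv z < B0)%Re -> (absv ff.[z] <= Rr * g0)%Re.
Proof.
move=> h; have Qz := Qz_nz z h.
have hw : odisc absv c0 Rr (P.[z] / Q.[z]).
  apply/Himg2; exists z; split; first by rewrite /odisc subr0.
  by rewrite /phi_cl (negbTE Qz).
have e : ff.[z] = (P.[z] / Q.[z] - c0) * Q.[z].
  by rewrite /ff hornerD hornerN hornerZ mulrBl divfK.
rewrite e avM; apply: Rmult_le_compat; try exact: av_ge0.
  by apply: Rlt_le; move: hw; rewrite /odisc.
have z0 := av_ge0 z.
apply: Rle_trans (gn_horner Q z) _; rewrite gnQ //; lra.
Qed.

Lemma ff0 : ff`_0 = 0.
Proof. by rewrite /ff coefB coefZ -!horner_coef0 c0E divfK ?subrr // Q0_nz. Qed.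

Lemma gn_lin r b : (0 <= r)%Re -> (r <= B0)%Re ->
  gn r (P - b *: Q) = Rmax (gn r ff) (absv (c0 - b) * g0).
Proof.
move=> r0 rB.
have e : P - b *: Q = ff + (c0 - b) *: Q by rewrite /ff scalerBl addrA subrK.
have up : (gn r (P - b *: Q) <= Rmax (gn r ff) (absv (c0 - b) * g0))%Re.
  by rewrite e; apply: Rle_trans (gnD _ r0 _ _) _; rewrite (gnZ _ r0) gnQ //; lra.
have lo1 : (absv (c0 - b) * g0 <= gn r (P - b *: Q))%Re.
  have := gn_ge r r0 (P - b *: Q) 0; rewrite e coefD coefZ ff0 add0r avM /= Rmult_1_r.
  by rewrite /g0 horner_coef0.
have lo2 : (gn r ff <= Rmax (gn r (P - b *: Q)) (absv (c0 - b) * g0))%Re.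
  have e2 : ff = (P - b *: Q) + - ((c0 - b) *: Q) by rewrite e addrK.
  rewrite {1}e2; apply: Rle_trans (gnD _ r0 _ _) _; rewrite (gnN _ r0) (gnZ _ r0) gnQ //; lra.
move: up lo2; rewrite /Rmax; case: Rle_dec => h1; case: Rle_dec => h2; lra.
Qed.

Definition Rf r := (gn r ff / g0)%Re.

Lemma Rf_ge0 r : (0 <= r)%Re -> (0 <= Rf r)%Re.
Proof. move=> r0; apply: Rmult_le_pos; [exact: gn_ge0| apply: Rlt_le; apply: Rinv_0_lt_compat; exact: g0_pos]. Qed.

Lemma phi_zeta r : (0 <= r)%Re -> (r <= B0)%Re ->
  phi_berk absv P Q (zeta absv 0 r) = zeta absv c0 (Rf r).
Proof.
move=> r0 rB.
have gp := g0_pos.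
have Rf0 := Rf_ge0 r r0.
rewrite zetaF /phi_berk zf0 gnQ //.
case: (Req_dec_T g0 0%Re) => [e|_] /=; first lra.
rewrite zetaF; congr Some; apply: functional_extensionality => h.
have [->|hnz] := eqVneq h 0.
  by rewrite /homog size_poly0 big_ord0 (gn0 _ r0) /zf comp_poly0 (gn0 _ Rf0) /Rdiv Rmult_0_l.
have [l [e sl]] := poly_fact h.
have sl' := sl hnz.
rewrite (homog_fact _ _ _ _ hnz e sl') (ms_prod _ _ _ _ (gn_ms r r0)).
have E1 : zf c0 (Rf r) h = (absv (lead_coef h) * rprod (fun b => Rmax (absv (c0 - b)) (Rf r)) l)%Re.
  rewrite {1}e (ms_prod _ _ _ _ (zf_ms c0 (Rf r) Rf0)); congr (_ * _)%Re.
  by apply: rprod_eq => b _; exact: zf_lin.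
rewrite E1.
have E2 : rprod (fun b => gn r (P - b *: Q)) l = (rprod (fun b => Rmax (absv (c0 - b)) (Rf r)) l * g0 ^ size l)%Re.
  rewrite -rprodC -rprodM; apply: rprod_eq => b _.
  rewrite gn_lin // Rmax_comm.
  have -> : gn r ff = (Rf r * g0)%Re by rewrite /Rf; field; lra.
  rewrite [RHS]Rmult_comm -RmaxRmult; last lra.
  by rewrite ![(g0 * _)%Re]Rmult_comm.
rewrite E2 -sl'; field; apply: pow_nonzero; lra.
Qed.

Lemma coef_bound k : (absv ff`_k * B0 ^ k <= Rr * g0)%Re.
Proof.
have [B0p _] := B0_pos.
have gp := g0_pos.
have M0 : (0 <= Rr * g0)%Re by apply: Rmult_le_pos; lra.
apply: sup_bound => //; first exact: av_ge0.
move=> a ha.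
have [us [sus gus]] := nodes_ex (size ff).
pose G := \poly_(i < size ff) (ff`_i * a ^+ i).
have hG : (gn 1 G <= Rr * g0)%Re.
  apply: (interp us gus) => //; first by rewrite sus size_poly.
  move=> u uin.
  have u1 := goodn_le1 us gus u uin.
  have -> : G.[u] = ff.[a * u].
    rewrite horner_poly horner_coef; apply: eq_bigr => i _.
    by rewrite exprMn mulrA.
  apply: ff_bound; rewrite avM.
  have := av_ge0 a; have := av_ge0 u; nra.
have := gn_ge 1 Rle_0_1 G k; rewrite pow1 Rmult_1_r coef_poly.
case: ltnP => hk.
  by rewrite avM avX => h; lra.
by rewrite nth_default // av0 Rmult_0_l.
Qed.

Lemma Rf_mono r s : (0 <= r)%Re -> (r <= s)%Re -> (Rf r <= Rf s)%Re.
Proof.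
move=> r0 rs; rewrite /Rf /Rdiv; apply: Rmult_le_compat_r.
  apply: Rlt_le; apply: Rinv_0_lt_compat; exact: g0_pos.
exact: gn_mono.
Qed.

Lemma Rf_B0 : (Rf B0 <= Rr)%Re.
Proof.
have [B0p _] := B0_pos; have gp := g0_pos.
have h : (gn B0 ff <= Rr * g0)%Re.
  apply: gn_le; last exact: coef_bound.
  apply: Rmult_le_pos; lra.
rewrite /Rf; apply: (Rmult_le_reg_r g0) => //.
rewrite /Rdiv Rmult_assoc Rinv_l; lra.
Qed.

Lemma size_ff_le k : ff`_k != 0 -> (k <= rdeg P Q)%N.
Proof.
move=> nz; have := leq_trans (size_polyD P (- (c0 *: Q))) _.
rewrite /rdeg; have hk : (k < size ff)%N.
  by rewrite ltnNge; apply: contra nz => h; rewrite nth_default.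
have sf : (size ff <= maxn (size P) (size Q))%N.
  apply: leq_trans (size_polyD _ _) _; rewrite size_polyN geq_max leq_maxl /=.
  by apply: leq_trans (size_scale_leq _ _) _; rewrite leq_maxr.
move=> _; rewrite -ltnS; apply: leq_trans hk _; apply: leq_trans sf _.
by case: (maxn _ _).
Qed.

Lemma lip_arith r s : (0 <= r)%Re -> (r < s)%Re -> (s <= B0)%Re ->
  (Rf s - Rf r <= INR (rdeg P Q) * (s - r) * Rr / B0)%Re.
Proof.
move=> r0 rs sB.
have [B0p _] := B0_pos; have gp := g0_pos.
have s0 : (0 <= s)%Re by lra.
have [k ek] := gn_ex s s0 ff.
have gr := gn_ge r r0 ff k.
have dp := pos_INR (rdeg P Q).
have RHS0 : (0 <= INR (rdeg P Q) * (s - r) * Rr / B0)%Re.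
  apply: Rmult_le_pos; last by apply: Rlt_le; apply: Rinv_0_lt_compat.
  apply: Rmult_le_pos; [apply: Rmult_le_pos|]; lra.
have key : ((Rf s - Rf r) * g0 <= absv ff`_k * (s ^ k - r ^ k))%Re.
  have -> : ((Rf s - Rf r) * g0 = gn s ff - gn r ff)%Re by rewrite /Rf; field; lra.
  lra.
case: k ek gr key => [|k] ek gr key.
  have : ((Rf s - Rf r) * g0 <= 0)%Re by move: key; rewrite /=; lra.
  move=> h; have : (Rf s - Rf r <= 0)%Re.
    apply: (Rmult_le_reg_r g0) => //; lra.
  lra.
have fk0 := av_ge0 ff`_k.+1.
have pd := pow_diff r s k r0 (Rlt_le _ _ rs).
have kd : (absv ff`_k.+1 * INR k.+1 <= absv ff`_k.+1 * INR (rdeg P Q))%Re.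
  have [->|nz] := eqVneq ff`_k.+1 0; first by rewrite av0 !Rmult_0_l; lra.
  apply: Rmult_le_compat_l => //; apply: le_INR; apply/leP; exact: size_ff_le.
have sk : (absv ff`_k.+1 * s ^ k <= Rr * g0 / B0)%Re.
  have cb := coef_bound k.+1.
  have : (absv ff`_k.+1 * s ^ k <= absv ff`_k.+1 * B0 ^ k)%Re.
    apply: Rmult_le_compat_l => //; apply: pow_incr; lra.
  have e : (absv ff`_k.+1 * B0 ^ k = absv ff`_k.+1 * B0 ^ k.+1 / B0)%Re by rewrite /=; field; lra.
  rewrite e => h; apply: Rle_trans h _.
  rewrite /Rdiv; apply: Rmult_le_compat_r => //; apply: Rlt_le; exact: Rinv_0_lt_compat.
have sk0 : (0 <= s ^ k)%Re by apply: pow_le.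
have st : (absv ff`_k.+1 * (s ^ k.+1 - r ^ k.+1) <= INR (rdeg P Q) * (s - r) * (Rr * g0 / B0))%Re.
  apply: Rle_trans (Rmult_le_compat_l _ _ _ fk0 pd) _.
  have e : (absv ff`_k.+1 * (INR k.+1 * s ^ k * (s - r)) = (absv ff`_k.+1 * INR k.+1) * s ^ k * (s - r))%Re by ring.
  rewrite e.
  have h1 : ((absv ff`_k.+1 * INR k.+1) * s ^ k * (s - r) <= (absv ff`_k.+1 * INR (rdeg P Q)) * s ^ k * (s - r))%Re.
    apply: Rmult_le_compat_r; first lra.
    by apply: Rmult_le_compat_r.
  apply: Rle_trans h1 _.
  have e2 : (absv ff`_k.+1 * INR (rdeg P Q) * s ^ k * (s - r) = INR (rdeg P Q) * (s - r) * (absv ff`_k.+1 * s ^ k))%Re by ring.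
  rewrite e2; apply: Rmult_le_compat_l => //; apply: Rmult_le_pos; lra.
have : ((Rf s - Rf r) * g0 <= (INR (rdeg P Q) * (s - r) * Rr / B0) * g0)%Re.
  apply: Rle_trans key _; apply: Rle_trans st _; right; field; lra.
move=> h; apply: (Rmult_le_reg_r g0) => //.
Qed.

Lemma diam0 r : (0 <= r)%Re -> (r <= 1)%Re -> diamG (zeta absv 0 r) = r.
Proof.
move=> r0 r1; rewrite (diam_zeta _ _ r0) av0 (Rmax_right 0) // Rmax_left //.
by rewrite /= Rmult_1_r Rmult_1_r; field.
Qed.

Lemma diamc R : (0 <= R)%Re -> (R <= absv c0)%Re -> diamG (zeta absv c0 R) = (R / absv c0 ^ 2)%Re.
Proof.
move=> r0 rc; rewrite (diam_zeta _ _ r0) [Rmax (absv c0) R]Rmax_left // [Rmax 1 _]Rmax_right //; lra.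
Qed.

Lemma lip_pair r s : (0 <= r)%Re -> (r < s)%Re -> (s <= B0)%Re ->
  let X := zeta absv 0 r in let Y := zeta absv 0 s in
  (dist absv (phi_berk absv P Q X) (phi_berk absv P Q Y) <= INR (rdeg P Q) / B0 * dist absv X Y)%Re /\
  (dist absv (phi_berk absv P Q Y) (phi_berk absv P Q X) <= INR (rdeg P Q) / B0 * dist absv Y X)%Re.
Proof.
move=> r0 rs sB X Y.
have [B0p B01] := B0_pos.
have s0 : (0 <= s)%Re by lra.
have hG : is_berk absv (zetaG absv) by apply: zeta_berk; lra.
have [j1 j2] := joinG_eq X Y hG (seg0 r s r0 (Rlt_le _ _ rs) ltac:(lra)).
have Rr0 := Rf_ge0 r r0.
have Rrs := Rf_mono r s r0 (Rlt_le _ _ rs).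
have RsB := Rf_mono s B0 s0 sB.
have RB := Rf_B0.
have Rsc : (Rf s <= absv c0)%Re by lra.
rewrite /X /Y !phi_zeta //; try lra.
have [k1 k2] := joinG_eq (zeta absv c0 (Rf r)) (zeta absv c0 (Rf s)) hG
  (segc c0 (Rf r) (Rf s) ltac:(lra) Rr0 Rrs Rsc).
rewrite /dist j1 j2 k1 k2 !diam0 ?diamc //; try lra.
have la := lip_arith r s r0 rs sB.
have c2 : (1 < absv c0 ^ 2)%Re by rewrite /=; nra.
have hq : ((Rf s - Rf r) / absv c0 ^ 2 <= INR (rdeg P Q) / B0 * (s - r))%Re.
  apply: (Rmult_le_reg_r (absv c0 ^ 2)); first lra.
  have -> : ((Rf s - Rf r) / absv c0 ^ 2 * absv c0 ^ 2 = Rf s - Rf r)%Re by field; lra.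
  apply: Rle_trans la _.
  have -> : (INR (rdeg P Q) * (s - r) * Rr / B0 = (INR (rdeg P Q) / B0 * (s - r)) * Rr)%Re by field; lra.
  apply: Rmult_le_compat_l.
    apply: Rmult_le_pos; last lra.
    apply: Rmult_le_pos; [exact: pos_INR| apply: Rlt_le; exact: Rinv_0_lt_compat].
  rewrite /=; nra.
split.
  have -> : (2 * (Rf s / absv c0 ^ 2) - Rf r / absv c0 ^ 2 - Rf s / absv c0 ^ 2 = (Rf s - Rf r) / absv c0 ^ 2)%Re by field; lra.
  by have -> : (2 * s - r - s = s - r)%Re by ring.
have -> : (2 * (Rf s / absv c0 ^ 2) - Rf s / absv c0 ^ 2 - Rf r / absv c0 ^ 2 = (Rf s - Rf r) / absv c0 ^ 2)%Re by field; lra.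
by have -> : (2 * s - s - r = s - r)%Re by ring.
Qed.

Lemma main_lip : lip_le absv P Q (in_seg absv (clpt absv (Some 0)) (zeta absv 0 B0)) (INR (rdeg P Q) / B0).
Proof.
have [B0p B01] := B0_pos.
move=> x y hx hy nxy.
have [r [[r0 rB] ex]] := seg_class B0 x (Rlt_le _ _ B0p) hx.
have [s [[s0 sB] ey]] := seg_class B0 y (Rlt_le _ _ B0p) hy.
rewrite ex ey.
case: (Rtotal_order r s) => [lt|[eq|gt]].
- by case: (lip_pair r s r0 lt sB).
- by exfalso; apply: nxy; rewrite ex ey eq.
- by case: (lip_pair s r s0 gt rB).
Qed.

End Main.

End Val.

Delimit Scope R_scope with R.
Local Close Scope ring_scope.

Theorem proposition5p7 (K : closedFieldType) (absv : K -> R)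
  (Habs : nonarch_complete_abs absv)
  (P Q : {poly K}) (HPQ : ratmap P Q) (d : nat) (Hd : d = rdeg P Q) (Hd1 : leq 1 d)
  (B0 : R) (HB0 : B0_of absv P Q B0)
  (c0 : K) (Hc0 : phi_cl P Q (Some (0 : K)%ring) = Some c0)
  (R0 : R) (HR0 : (0 < R0)%R)
  (Himg : (forall z : K, odisc absv (0 : K)%ring B0 z -> phi_cl P Q (Some z) <> None) /\
          (forall w : K, (exists z : K, odisc absv (0 : K)%ring B0 z /\ phi_cl P Q (Some z) = Some w)
                         <-> odisc absv c0 R0 w))
  (Hc0big : (1 < absv c0)%R) (HRc0 : (R0 <= absv c0)%R) :
  lip_le absv P Q (in_seg absv (clpt absv (Some (0 : K)%ring)) (zeta absv (0 : K)%ring B0)) (INR d / B0)%R.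
Proof.
subst d; case: Himg => H1 H2.
exact: (main_lip _ _ Habs _ _ _ _ _ HB0 Hc0 HR0 H1 H2 Hc0big HRc0).
Qed.
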